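(* Let $G$ be a simple graph with $m\ge 1$ edges and let $G'$ be an induced subgraph of $G$ formed by some blocks of $G$, with $m'\ge1$ edges. Then $\lambda_i(G)\ge\lambda_i(G')\ge\lambda_{m-m'+i}(G)$ for every $1\le i\le m'$.
   Context: A block of $G$ is a maximal connected induced subgraph without cut vertices. For an oriented edge $e$ write $e^-$ for its tail and $e^+$ for its head. For distinct edges $e,e'$: $e\leftrightarrow e'$ means $e^+=e'^-$ or $e'^+=e^-$; $e\overset{\pm}{\sim}e'$ means $e^+=e'^+$ or $e^-=e'^-$; $e\vartriangle e'$ means $e,e'$ are two edges of a common triangle. $\triangle(e)$ is the number of triangles containing $e$ in the graph under consideration. The Helmholtzian matrix $\mathcal{H}(G)=(h_{ee'})$ is indexed by edges, with $h_{ee}=\triangle(e)+2$, and for $e\ne e'$: $h_{ee'}=-1$ if $e\leftrightarrow e'$ and not $e\vartriangle e'$; $h_{ee'}=1$ if $e\overset{\pm}{\sim}e'$ and not $e\vartriangle e'$; $h_{ee'}=0$ otherwise. $\lambda_1(G)\ge\cdots\ge\lambda_m(G)$ are the eigenvalues of $\mathcal{H}(G)$ for an arbitrary edge orientation (independent of the orientation). *)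

(* Defs.v *)
From HB Require Import structures.
From mathcomp Require Import all_boot all_order all_algebra.
Set Implicit Arguments. Unset Strict Implicit. Unset Printing Implicit Defensive.
Import Order.TTheory GRing.Theory Num.Theory.
Local Open Scope ring_scope.

Section Graphs.
Variable T : finType.

Definition simple_graph (adj : rel T) : Prop :=
  irreflexive adj /\ symmetric adj.

Definition induced_adj (adj : rel T) (A : {set T}) : rel T :=
  [rel x y | [&& adj x y, x \in A & y \in A]].

Definition connected_in (adj : rel T) (A : {set T}) : bool :=
  (A != set0) &&
  [forall x in A, forall y in A, connect (induced_adj adj A) x y].

Definition no_cut_vertex (adj : rel T) (A : {set T}) : bool :=
  [forall v in A, forall x in A :\ v, forall y in A :\ v,
     connect (induced_adj adj (A :\ v)) x y].

Definition is_block (adj : rel T) (B : {set T}) : bool :=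
  maxset (fun A : {set T} => connected_in adj A && no_cut_vertex adj A) B.

Definition formed_by_blocks (adj : rel T) (S : {set T}) : Prop :=
  exists Bs : {set {set T}},
    [/\ (forall B, B \in Bs -> is_block adj B),
        S = \bigcup_(B in Bs) B &
        forall x y, x \in S -> y \in S -> adj x y ->
          exists2 B, B \in Bs & (x \in B) && (y \in B)].

Definition orientation (adj : rel T) (o : rel T) : Prop :=
  forall x y, adj x y -> o x y != o y x.

(* Oriented edges (tail, head) of the induced subgraph G[S]. *)
Definition oedges (adj o : rel T) (S : {set T}) : {set T * T} :=
  [set e : T * T | [&& adj e.1 e.2, o e.1 e.2, e.1 \in S & e.2 \in S]].

Definition ntri (adj : rel T) (S : {set T}) (e : T * T) : nat :=
  #|[set w | [&& w \in S, adj e.1 w & adj e.2 w]]|.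

Definition ehead_tail (e e' : T * T) : bool := (e.2 == e'.1) || (e'.2 == e.1).
Definition esame_end (e e' : T * T) : bool := (e.2 == e'.2) || (e.1 == e'.1).
(* e and e' are two edges of a common triangle (of G[S]; endpoints of edges of
   G[S] lie in S). *)
Definition etri (adj : rel T) (e e' : T * T) : bool :=
  let V := [set e.1; e.2; e'.1; e'.2] in
  (#|V| == 3) && [forall x in V, forall y in V, (x != y) ==> adj x y].

End Graphs.

Section Helm.
Variables (R : numDomainType) (T : finType).

Definition helmholtzian (adj o : rel T) (S : {set T}) :
    'M[R]_#|oedges adj o S| :=
  \matrix_(i, j)
    let e  := enum_val i in
    let e' := enum_val j in
    if i == j then (ntri adj S e)%:R + 2
    else if ehead_tail e e' && ~~ etri adj e e' then -1
    else if esame_end e e' && ~~ etri adj e e' then 1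
    else 0.
End Helm.

(* s is the list of eigenvalues of A (with multiplicity) in nonincreasing
   order: lambda_1 >= ... >= lambda_n. *)
Definition spectrum (R : realDomainType) (n : nat) (A : 'M[R]_n) (s : seq R)
  : Prop :=
  sorted (fun x y : R => y <= x) s /\
  char_poly A = \prod_(x <- s) ('X - x%:P).

(* Main.v *)
Require Import Defs.
From HB Require Import structures.
From mathcomp Require Import all_boot all_order all_algebra.
From mathcomp Require Import spectral sesquilinear zify.
From mathcomp Require Import complex.
Import Order.TTheory GRing.Theory Num.Theory.
Set Implicit Arguments. Unset Strict Implicit. Unset Printing Implicit Defensive.
Local Open Scope ring_scope.

Local Notation "M ^H" := (map_mx Num.conj (trmx M)) (at level 8).

Section Core.
Variable C : numClosedFieldType.


Lemma adjM m n p (A : 'M[C]_(m, n)) (B : 'M[C]_(n, p)) :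
  (A *m B)^H = B^H *m A^H.
Proof. by rewrite trmx_mul map_mxM. Qed.

Lemma sum_delta n (a : 'I_n) (X : 'I_n -> C) :
  \sum_p (a == p)%:R * X p = X a.
Proof.
rewrite (bigD1 a) //= eqxx mul1r big1 ?addr0 // => p /negPf.
by rewrite eq_sym => ->; rewrite mul0r.
Qed.

Lemma sel_mx k n (f : 'I_k -> 'I_n) (M : 'M[C]_n) :
  rowsub f 1%:M *m M *m (rowsub f 1%:M)^H = \matrix_(i, j) M (f i) (f j).
Proof.
apply/matrixP => i j; rewrite !mxE.
under eq_bigr => l _ do rewrite !mxE.
under eq_bigr => l _ do under eq_bigr => p _ do rewrite !mxE.
under eq_bigr => l _ do rewrite sum_delta conjC_nat mulrC.
by rewrite sum_delta.
Qed.

Lemma sel_id k n (f : 'I_k -> 'I_n) : injective f ->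
  rowsub f 1%:M *m (rowsub f 1%:M)^H = 1%:M :> 'M[C]_k.
Proof.
move=> finj; rewrite -[X in X *m _]mulmx1 sel_mx.
by apply/matrixP => i j; rewrite !mxE (inj_eq finj).
Qed.

Lemma sel_diag k n (f : 'I_k -> 'I_n) (d : 'rV[C]_n) : injective f ->
  rowsub f 1%:M *m diag_mx d *m (rowsub f 1%:M)^H = diag_mx (\row_j d 0 (f j)).
Proof.
move=> finj; rewrite sel_mx.
by apply/matrixP => i j; rewrite !mxE (inj_eq finj).
Qed.

Lemma quad_diag k (D : 'rV[C]_k) (r : 'rV[C]_k) :
  (D *m diag_mx r *m D^H) 0 0 = \sum_j D 0 j * (D 0 j)^* * r 0 j.
Proof.
rewrite mul_mx_diag !mxE; apply: eq_bigr => j _; rewrite !mxE.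
by rewrite mulrAC.
Qed.

Lemma quad_one k (D : 'rV[C]_k) :
  (D *m D^H) 0 0 = \sum_j D 0 j * (D 0 j)^*.
Proof. by rewrite mxE; apply: eq_bigr => j _; rewrite !mxE. Qed.

Lemma quadM n k (Z : 'M[C]_(k, n)) (W : 'rV_k) (M : 'M_n) :
    (W *m Z) *m M *m (W *m Z)^H = W *m (Z *m M *m Z^H) *m W^H.
Proof. by rewrite adjM !mulmxA. Qed.

Lemma core n m (A : 'M[C]_n) (P : 'M_n) (d : 'rV_n) (B : 'M[C]_m) (Q : 'M_m)
  (e : 'rV_m) (E : 'M_(m, n)) (lam mu : C) :
  P *m P^H = 1%:M -> A = P^H *m diag_mx d *m P ->
  Q *m Q^H = 1%:M -> B = Q^H *m diag_mx e *m Q ->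
  E *m E^H = 1%:M -> B = E *m A *m E^H ->
  (n < #|[set k | (d 0 k <= lam)%R]| + #|[set k | (mu <= e 0 k)%R]|)%N -> mu <= lam.
Proof.
move=> PU Adef QU Bdef EU BE hcard.
set K := [set k | d 0 k <= lam]; set K' := [set k | mu <= e 0 k].
pose f := @enum_val _ (mem K); pose g := @enum_val _ (mem K').
have finj : injective f by apply: enum_val_inj.
have ginj : injective g by apply: enum_val_inj.
pose X := rowsub f 1%:M *m P; pose Y := rowsub g 1%:M *m Q *m E.
have XU : X *m X^H = 1%:M.
  by rewrite /X adjM mulmxA -(mulmxA _ P) PU mulmx1 sel_id.
have YU : Y *m Y^H = 1%:M.
  rewrite /Y !adjM !mulmxA -(mulmxA _ E) EU mulmx1 -(mulmxA _ Q) QU mulmx1.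
  by rewrite sel_id.
have PAP : P *m A *m P^H = diag_mx d.
  by rewrite Adef !mulmxA PU mul1mx -mulmxA PU mulmx1.
have QBQ : Q *m B *m Q^H = diag_mx e.
  by rewrite Bdef !mulmxA QU mul1mx -mulmxA QU mulmx1.
have XA : X *m A *m X^H = diag_mx (\row_j d 0 (f j)).
  rewrite /X adjM !mulmxA -(mulmxA _ P) -(mulmxA _ (P *m A)) PAP.
  by rewrite sel_diag.
have YA : Y *m A *m Y^H = diag_mx (\row_j e 0 (g j)).
  rewrite /Y !adjM !mulmxA -(mulmxA _ E) -(mulmxA _ (E *m A)) -BE.
  rewrite -(mulmxA _ Q) -(mulmxA _ (Q *m B)) QBQ.
  by rewrite sel_diag.
have rX : \rank X = #|K|.
  by apply: mxrank_unitary; apply/unitarymxP.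
have rY : \rank Y = #|K'|.
  by apply: mxrank_unitary; apply/unitarymxP.
have : (X :&: Y)%MS != 0.
  rewrite -mxrank_eq0 -lt0n.
  have := mxrank_sum_cap X Y; rewrite rX rY => h.
  have := rank_leq_col (X + Y)%MS.
  move: hcard; rewrite -h; lia.
case/rowV0Pn => v; rewrite sub_capmx => /andP[/submxP[D vD] /submxP[D' vD']] vn0.
have Npos : 0 < (v *m v^H) 0 0.
  by have := dotmx_is_dotmx vn0; rewrite dotmxE.
have N1 : (v *m v^H) 0 0 = \sum_j D 0 j * (D 0 j)^*.
  by rewrite vD adjM mulmxA -(mulmxA D) XU mulmx1 quad_one.
have N2 : (v *m v^H) 0 0 = \sum_j D' 0 j * (D' 0 j)^*.
  by rewrite vD' adjM mulmxA -(mulmxA D') YU mulmx1 quad_one.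
have V1 : (v *m A *m v^H) 0 0 = \sum_j D 0 j * (D 0 j)^* * d 0 (f j).
  by rewrite vD quadM XA quad_diag; apply: eq_bigr => j _; rewrite mxE.
have V2 : (v *m A *m v^H) 0 0 = \sum_j D' 0 j * (D' 0 j)^* * e 0 (g j).
  by rewrite vD' quadM YA quad_diag; apply: eq_bigr => j _; rewrite mxE.
have le1 : (v *m A *m v^H) 0 0 <= lam * (v *m v^H) 0 0.
  rewrite V1 N1 mulr_sumr; apply: ler_sum => j _.
  rewrite [X in _ <= X]mulrC; apply: ler_wpM2l; first exact: mul_conjC_ge0.
  by have := enum_valP j; rewrite inE.
have le2 : mu * (v *m v^H) 0 0 <= (v *m A *m v^H) 0 0.
  rewrite V2 N2 mulr_sumr; apply: ler_sum => j _.
  rewrite [X in X <= _]mulrC; apply: ler_wpM2l; first exact: mul_conjC_ge0.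
  by have := enum_valP j; rewrite inE.
by rewrite -(ler_pM2r Npos); apply: le_trans le2 le1.
Qed.

End Core.

Lemma char_poly_sim (F : fieldType) n (P M : 'M[F]_n) : P \in unitmx ->
  char_poly (invmx P *m M *m P) = char_poly M.
Proof.
move=> Pu; rewrite /char_poly /char_poly_mx.
set Pi := map_mx polyC (invmx P); set P' := map_mx polyC P.
have h : Pi *m P' = 1%:M by rewrite -map_mxM mulVmx // map_mx1.
rewrite !map_mxM -/Pi -/P'.
have -> : 'X%:M - Pi *m map_mx polyC M *m P' = Pi *m ('X%:M - map_mx polyC M) *m P'.
  by rewrite mulmxBr mulmxBl scalar_mxC -[(_%:M *m _) *m _]mulmxA h mulmx1.
by rewrite !det_mulmx mulrAC -det_mulmx h det1 mul1r.
Qed.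

Lemma card_count (T : finType) (p : pred T) :
  #|[set k | p k]| = count p (enum T).
Proof. by rewrite cardsE cardE /enum_mem size_filter count_filter; apply: eq_count => x /=; rewrite andbT. Qed.

Section Bridge.
Variable R : rcfType.
Local Notation C := (R[i]).
Local Notation inj := (real_complex R).

Lemma count_spec n (A : 'M[C]_n) (H : 'M[R]_n) (s : seq R) (P : 'M[C]_n) (d : 'rV[C]_n) :
  A = map_mx inj H -> P \in unitmx -> A = invmx P *m diag_mx d *m P ->
  char_poly H = \prod_(x <- s) ('X - x%:P) ->
  forall p : pred C, #|[set k | p (d 0 k)]| = count (fun x => p (inj x)) s.
Proof.
move=> AH Pu Ad cH p.
have pe : perm_eq (map inj s) [seq d 0 k | k <- enum 'I_n].
  apply: prod_XsubC_eq.
  rewrite big_map (big_map _ predT (fun y => 'X - y%:P)).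
  have -> : \prod_(x <- s) ('X - (inj x)%:P) = char_poly A.
    rewrite AH -map_char_poly cH rmorph_prod; apply: eq_bigr => x _.
    by rewrite rmorphB /= map_polyX map_polyC.
  rewrite Ad char_poly_sim // char_poly_trig ?diag_mx_is_trig //.
  by rewrite big_enum /=; apply: eq_bigr => k _; rewrite mxE eqxx mulr1n.
apply: etrans (@card_count _ (fun k => p (d 0 k))) _.
by rewrite -(count_map (fun k => d 0 k)) -(permP pe) count_map.
Qed.



Lemma spec_exists n (H : 'M[R]_n) : H^T = H ->
  exists P : 'M[C]_n, exists d : 'rV[C]_n,
    [/\ P *m P^H = 1%:M, P \in unitmx,
        map_mx inj H = invmx P *m diag_mx d *m P &
        map_mx inj H = P^H *m diag_mx d *m P].
Proof.
move=> Hsym; set A := map_mx inj H.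
have AH : A^H = A.
  apply/matrixP => i j; rewrite !mxE.
  rewrite conj_Creal; last by apply/complex_realP; eexists.
  have := congr1 (fun M : 'M[R]_n => M i j) Hsym; rewrite /= mxE => ->.
  by [].
have An : A \is normalmx by rewrite qualifE; apply/eqP; rewrite -[A^H]/(A^H) AH.
have PU := spectral_unitarymx A.
have Pu := spectral_unit A.
have /orthomx_spectralP hA := An.
exists (spectralmx A), (spectral_diag A); split => //.
- exact/unitarymxP.
- by rewrite -invmx_unitary.
Qed.

End Bridge.

Section Sorted.
Variable R : realDomainType.

Lemma count_split (p : pred nat) n i : (i <= n)%N ->
  count p (iota 0 n) = (count p (iota 0 i) + count p (iota i (n - i)))%N.
Proof. by move=> hi; rewrite -count_cat -{1}(subnKC hi) iotaD. Qed.

Lemma count_nth (p : pred R) (s : seq R) :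
  count p s = count (fun j => p (nth 0 s j)) (iota 0 (size s)).
Proof. by rewrite -{1}(mkseq_nth 0 s) /mkseq count_map. Qed.

Lemma count_all_iota (p : pred nat) a b :
  (forall j, (a <= j < a + b)%N -> p j) -> count p (iota a b) = b.
Proof.
move=> h; have : all p (iota a b).
  by apply/allP => j; rewrite mem_iota => /h.
by rewrite all_count size_iota => /eqP.
Qed.

Lemma sorted_count_le (s : seq R) i : sorted (fun x y => y <= x) s ->
  (i < size s)%N -> (size s - i <= count (fun x => (x <= nth 0 s i)%R) s)%N.
Proof.
move=> ss hi; rewrite count_nth (count_split _ (ltnW hi)).
rewrite (count_all_iota (b := size s - i)); first by rewrite leq_addl.
move=> j /andP[h1 h2].
have tr : transitive (fun x y : R => y <= x).
  by move=> x y z /= h h'; apply: le_trans h' h.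
have := sorted_leq_nth tr (fun x => lexx x) 0 ss => /(_ i j).
by rewrite !inE; apply; lia.
Qed.

Lemma sorted_count_ge (s : seq R) i : sorted (fun x y => y <= x) s ->
  (i < size s)%N -> (i.+1 <= count (fun x => (nth 0 s i <= x)%R) s)%N.
Proof.
move=> ss hi; rewrite count_nth (count_split _ (hi : (i.+1 <= size s)%N)).
rewrite (count_all_iota (b := i.+1)); first by rewrite leq_addr.
move=> j /andP[h1 h2].
have tr : transitive (fun x y : R => y <= x).
  by move=> x y z /= h h'; apply: le_trans h' h.
have := sorted_leq_nth tr (fun x => lexx x) 0 ss => /(_ j i).
by rewrite !inE; apply; lia.
Qed.

End Sorted.

Section G.
Variable T : finType.
Variable adj : rel T.
Hypothesis adj_sym : symmetric adj.

Lemma induced_sym (A : {set T}) : symmetric (induced_adj adj A).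
Proof. by move=> x y; rewrite /induced_adj /= adj_sym; case: (x \in A); case: (y \in A); rewrite ?andbF. Qed.

Lemma conn_add (A : {set T}) w z : z \in A -> adj w z ->
  (forall a b, a \in A -> b \in A -> connect (induced_adj adj A) a b) ->
  forall a b, a \in w |: A -> b \in w |: A -> connect (induced_adj adj (w |: A)) a b.
Proof.
move=> zA wz hA.
have mono : forall a b, a \in A -> b \in A -> connect (induced_adj adj (w |: A)) a b.
  move=> a b aA bA; apply: connect_sub (hA a b aA bA) => x y; rewrite /induced_adj /= => /and3P[xy xA yA].
  by apply: connect1; rewrite /induced_adj /= xy !inE xA yA !orbT.

have toz : forall a, a \in w |: A -> connect (induced_adj adj (w |: A)) a z.
  move=> a; rewrite !inE => /orP[/eqP->|aA]; last exact: mono.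
  by apply: connect1; rewrite /induced_adj /= wz !inE eqxx zA orbT.
move=> a b aB bB; apply: connect_trans (toz a aB) _.
by rewrite (sym_connect_sym (@induced_sym _)); apply: toz.
Qed.

Lemma connP (A : {set T}) : connected_in adj A ->
  forall a b, a \in A -> b \in A -> connect (induced_adj adj A) a b.
Proof.
move=> /andP[_ /forall_inP h] a b aA bA.
by have /forall_inP := h a aA; apply.
Qed.

Lemma ncvP (A : {set T}) : no_cut_vertex adj A ->
  forall v, v \in A -> forall a b, a \in A :\ v -> b \in A :\ v ->
  connect (induced_adj adj (A :\ v)) a b.
Proof.
move=> /forall_inP h v vA a b aA bA.
by have /forall_inP /(_ a aA) /forall_inP := h v vA; apply.
Qed.

Lemma tri_in_block (B : {set T}) x y w : is_block adj B -> x \in B -> y \in B ->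
  x != y -> adj x w -> adj y w -> w \in B.
Proof.
move=> /maxsetP [/andP[cB nB] maxB] xB yB xy xw yw.
apply/negPn/negP => wB.
have wx : adj w x by rewrite adj_sym.
have wy : adj w y by rewrite adj_sym.
have pB : connected_in adj (w |: B) && no_cut_vertex adj (w |: B).
apply/andP; split.
  apply/andP; split; first by apply/set0Pn; exists w; rewrite setU11.
  apply/forall_inP => a aB; apply/forall_inP => b bB.
  exact: (conn_add xB wx (connP cB)).
apply/forall_inP => v vB'; apply/forall_inP => a aB; apply/forall_inP => b bB.
case: (eqVneq v w) => [vw | vw].
  subst v.
  have e : (w |: B) :\ w = B.
    by apply/setP => u; rewrite !inE; case: (eqVneq u w) => // ->; rewrite (negPf wB).
  move: aB bB; rewrite e => aB bB; exact: connP.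
have vB : v \in B by move: vB'; rewrite !inE (negPf vw).
have e : (w |: B) :\ v = w |: (B :\ v).
  apply/setP => u; rewrite !inE; case: (eqVneq u w) => [->|//]; by rewrite eq_sym vw.
move: aB bB; rewrite e.
case: (eqVneq v x) => [vx | vx].
  subst v; apply: (conn_add (z := y)) => //; first by rewrite !inE eq_sym xy.
  exact: ncvP.
apply: (conn_add (z := x)) => //; first by rewrite !inE eq_sym vx.
exact: ncvP.
have eB := maxB _ pB (subsetUr _ _).
by move: wB; rewrite -eB setU11.
Qed.

End G.

Section H.
Local Open Scope ring_scope.
Variables (T : finType) (adj o : rel T).
Hypothesis sg : simple_graph adj.

Lemma ntri_block (S : {set T}) e : formed_by_blocks adj S -> e \in oedges adj o S ->
  ntri adj setT e = ntri adj S e.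
Proof.
case: sg => irr sym [Bs [hB hS hE]].
rewrite inE => /and4P[a12 _ x1 x2].
have [B BBs /andP[xB yB]] := hE _ _ x1 x2 a12.
rewrite /ntri.
have -> // : [set w | [&& w \in setT, adj e.1 w & adj e.2 w]] =
             [set w | [&& w \in S, adj e.1 w & adj e.2 w]].
apply/setP => w; rewrite !inE.
case: (boolP (adj e.1 w && adj e.2 w)) => [/andP[h1 h2]|]; last by rewrite !andbF.
rewrite andbT; symmetry.
have wB : w \in B.
  apply: (tri_in_block sym (hB _ BBs) xB yB) => //.
  by apply/negP => /eqP eq; move: a12; rewrite eq irr.
rewrite andbT hS; apply: (subsetP (bigcup_sup B BBs)) => //.
Qed.

Lemma etri_sym e e' : etri adj e e' = etri adj e' e.
Proof.
rewrite /etri.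
have -> : [set e.1; e.2; e'.1; e'.2] = [set e'.1; e'.2; e.1; e.2] :> {set T}.
  by apply/setP => u; rewrite !inE; case: (u == e.1); case: (u == e.2);
     case: (u == e'.1); case: (u == e'.2).
by [].
Qed.

Lemma helm_sym (R : numDomainType) (S : {set T}) :
  (helmholtzian R adj o S)^T = helmholtzian R adj o S.
Proof.
apply/matrixP => i j; rewrite !mxE /= eq_sym etri_sym.
have -> : ehead_tail (enum_val j) (enum_val i) = ehead_tail (enum_val i) (enum_val j).
  by rewrite /ehead_tail orbC.
have -> : esame_end (enum_val j) (enum_val i) = esame_end (enum_val i) (enum_val j).
  by rewrite /esame_end eq_sym [X in _ || X]eq_sym.
case: (eqVneq i j) => [->|//]; by [].
Qed.

End H.

Section P.
Local Open Scope ring_scope.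
Variables (T : finType) (adj o : rel T).
Hypothesis sg : simple_graph adj.

Lemma oedges_sub (S : {set T}) : oedges adj o S \subset oedges adj o setT.
Proof.
by apply/subsetP => e; rewrite !inE => /and4P[-> -> _ _].
Qed.

Lemma helm_sub (R : numDomainType) (S : {set T}) x0 (hx0 : x0 \in oedges adj o setT) :
  formed_by_blocks adj S ->
  let f := fun i : 'I_#|oedges adj o S| => enum_rank_in hx0 (enum_val i) in
  injective f /\ forall i j, helmholtzian R adj o S i j = helmholtzian R adj o setT (f i) (f j).
Proof.
move=> fb f.
have fK : forall i, enum_val (f i) = enum_val i.
  move=> i; rewrite /f enum_rankK_in //.
  exact: (subsetP (oedges_sub S) _ (enum_valP i)).
have finj : injective f.
  by move=> i j /(congr1 enum_val); rewrite !fK => /enum_val_inj.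
split => // i j; rewrite !mxE /= !fK (inj_eq finj).
by rewrite (ntri_block (o := o) sg fb (enum_valP i)).
Qed.

End P.


Section Main.
Variable R : rcfType.
Local Notation C := (R[i]).
Local Notation inj := (real_complex R).

Lemma size_spec n (A : 'M[R]_n) s : char_poly A = \prod_(x <- s) ('X - x%:P) ->
  size s = n.
Proof.
move=> h; have := size_char_poly A; rewrite h size_prod_XsubC.
by case.
Qed.

Lemma interlace_gen n m (HT : 'M[R]_n) (HS : 'M[R]_m) (f : 'I_m -> 'I_n) s s' :
  injective f -> HT^T = HT -> HS^T = HS ->
  (forall i j, HS i j = HT (f i) (f j)) ->
  spectrum HT s -> spectrum HS s' ->
  forall i, (i < m)%N ->
    nth 0 s' i <= nth 0 s i /\ nth 0 s (n - m + i)%N <= nth 0 s' i.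
Proof.
move=> finj symT symS hsub [sT cT] [sS cS] i hi.
have mn : (m <= n)%N by have := leq_card f finj; rewrite !card_ord.
have sz := size_spec cT; have sz' := size_spec cS.
have [P [d [PU Pu eqi eqH]]] := spec_exists symT.
have [Q [e [QU Qu eqi' eqH']]] := spec_exists symS.
pose E : 'M[C]_(m, n) := rowsub f 1%:M.
have EU : E *m E^H = 1%:M by apply: sel_id.
have BE : map_mx inj HS = E *m map_mx inj HT *m E^H.
  by rewrite sel_mx; apply/matrixP => a b; rewrite !mxE hsub.
have cnt := count_spec (erefl _) Pu eqi cT.
have cnt' := count_spec (erefl _) Qu eqi' cS.
split.
  rewrite -lecR; apply: (core PU eqH QU eqH' EU BE).
  rewrite (cnt (fun z => z <= inj (nth 0 s i))) (cnt' (fun z => inj (nth 0 s' i) <= z)).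
  have e1 : count (fun x => inj x <= inj (nth 0 s i)) s = count (fun x => x <= nth 0 s i) s.
    by apply: eq_count => x; rewrite lecR.
  have e2 : count (fun x => inj (nth 0 s' i) <= inj x) s' = count (fun x => nth 0 s' i <= x) s'.
    by apply: eq_count => x; rewrite lecR.
  rewrite e1 e2.
  have := sorted_count_le (i := i) sT; rewrite sz => /(_ (leq_trans hi mn)).
  have := sorted_count_ge (i := i) sS; rewrite sz' => /(_ hi).
  lia.
set j := (n - m + i)%N.
have hj : (j < n)%N by rewrite /j; lia.
rewrite -lecR -lerN2.
have dN : forall k (r : 'rV[C]_k), diag_mx (- r) = - diag_mx r.
  by move=> k r; apply/matrixP => a b; rewrite !mxE mulNrn.
have eqN : - map_mx inj HT = P^H *m diag_mx (- d) *m P.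
  by rewrite eqH dN mulmxN mulNmx.
have eqN' : - map_mx inj HS = Q^H *m diag_mx (- e) *m Q.
  by rewrite eqH' dN mulmxN mulNmx.
have BE' : - map_mx inj HS = E *m (- map_mx inj HT) *m E^H.
  by rewrite BE mulmxN mulNmx.
apply: (core PU eqN QU eqN' EU BE').
have -> : [set k | (- d) 0 k <= - inj (nth 0 s j)] = [set k | inj (nth 0 s j) <= d 0 k].
  by apply/setP => k; rewrite !inE !mxE lerN2.
have -> : [set k | - inj (nth 0 s' i) <= (- e) 0 k] = [set k | e 0 k <= inj (nth 0 s' i)].
  by apply/setP => k; rewrite !inE !mxE lerN2.
rewrite (cnt (fun z => inj (nth 0 s j) <= z)) (cnt' (fun z => z <= inj (nth 0 s' i))).
have e1 : count (fun x => inj (nth 0 s j) <= inj x) s = count (fun x => nth 0 s j <= x) s.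
  by apply: eq_count => x; rewrite lecR.
have e2 : count (fun x => inj x <= inj (nth 0 s' i)) s' = count (fun x => x <= nth 0 s' i) s'.
  by apply: eq_count => x; rewrite lecR.
rewrite e1 e2.
have := sorted_count_ge (i := j) sT; rewrite sz => /(_ hj).
have := sorted_count_le (i := i) sS; rewrite sz' => /(_ hi).
rewrite /j; lia.
Qed.

End Main.

Theorem corollary4p5 (R : rcfType) (T : finType) (adj o : rel T) (S : {set T})
  (s s' : seq R) :
  simple_graph adj ->
  orientation adj o ->
  formed_by_blocks adj S ->
  (1 <= #|oedges adj o setT|)%N ->
  (1 <= #|oedges adj o S|)%N ->
  spectrum (helmholtzian R adj o setT) s ->
  spectrum (helmholtzian R adj o S) s' ->
  forall i : nat, (i < #|oedges adj o S|)%N ->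
    nth 0 s' i <= nth 0 s i /\
    nth 0 s (#|oedges adj o setT| - #|oedges adj o S| + i)%N <= nth 0 s' i.
Proof.
move=> sg _ fb hT _ spT spS.
have /card_gt0P [x0 hx0] : (0 < #|oedges adj o setT|)%N by [].
have [finj hsub] := @helm_sub T adj o sg R S x0 hx0 fb.
exact: (interlace_gen finj (helm_sym _ _ _ _) (helm_sym _ _ _ _) hsub spT spS).
Qed.
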